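(* Let $\mathcal{R}$ be a finite valuation ring of order $q^r$, where $q$ is a power of an odd prime. For every constant $c>0$ there is a constant $C>0$ depending only on $c$ such that: for every $\mathcal{A}\subset\mathcal{R}$ with $|\mathcal{A}|\ge 2q^{r-1}$ and $|\mathcal{A}+\mathcal{A}|\,|\mathcal{A}|^2\ge c\,q^{3r-1}$, \[\max\{|\mathcal{A}+\mathcal{A}|,\ |\mathcal{A}^2+\mathcal{A}^2|\}\ \ge\ C\,q^{r/3}|\mathcal{A}|^{2/3}.\]
   Context: A finite valuation ring is a finite, local, principal commutative ring with identity. Its unique maximal ideal is $(z)$ for a uniformizer $z$; the residue field $\mathcal{R}/(z)$ has $q$ elements; $r$ is the smallest positive integer with $z^r=0$; then $|\mathcal{R}|=q^r$ and $|(z)|=q^{r-1}$. For $\mathcal{A}\subset\mathcal{R}$: $\mathcal{A}+\mathcal{A}=\{a+b: a,b\in\mathcal{A}\}$, $\mathcal{A}^2=\{x^2: x\in\mathcal{A}\}$, and $\mathcal{A}^2+\mathcal{A}^2=\{u+v: u,v\in\mathcal{A}^2\}$. *)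

(* Defs.v *)
From mathcomp Require Import all_boot all_order all_algebra.
Set Implicit Arguments. Unset Strict Implicit. Unset Printing Implicit Defensive.
Import GRing.Theory.
Local Open Scope ring_scope.

Section FVR.
Variable R : finComNzRingType.

Definition is_ideal (I : {set R}) : Prop :=
  [/\ 0 \in I,
      forall x y, x \in I -> y \in I -> x + y \in I &
      forall r x, x \in I -> r * x \in I].

Definition proper_ideal (I : {set R}) : Prop := is_ideal I /\ 1 \notin I.

Definition maximal_ideal (I : {set R}) : Prop :=
  proper_ideal I /\ forall J, proper_ideal J -> I \subset J -> J = I.

Definition pideal (a : R) : {set R} := [set a * x | x in R].

Definition local_ring : Prop :=
  exists M, forall J, maximal_ideal J <-> J = M.

Definition principal_ring : Prop :=
  forall I, is_ideal I -> exists a, I = pideal a.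

(* finite valuation ring: finite (finType), commutative with identity
   (finComNzRingType), local and principal *)
Definition finite_valuation_ring : Prop := local_ring /\ principal_ring.

Definition uniformizer (z : R) : Prop := maximal_ideal (pideal z).

Definition nil_index (z : R) (r : nat) : Prop :=
  (0 < r)%N /\ z ^+ r = 0 /\ forall k, (0 < k < r)%N -> z ^+ k != 0.

(* size of the residue field R/(z) = number of cosets of (z) *)
Definition residue_size (z : R) : nat := (#|R| %/ #|pideal z|)%N.

Definition sumset (A : {set R}) : {set R} := [set a + b | a in A, b in A].
Definition sqset (A : {set R}) : {set R} := [set x ^+ 2 | x in A].
End FVR.

(* Main.v *)
Require Import Defs.
From mathcomp Require Import all_boot all_order all_algebra.
From mathcomp Require Import zify ring lra.
Set Implicit Arguments. Unset Strict Implicit. Unset Printing Implicit Defensive.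
Import Order.TTheory GRing.Theory Num.Theory.


Section Gen.
Local Open Scope ring_scope.
Variable Rg : finComNzRingType.

Definition unitb (x : Rg) := [exists y : Rg, x * y == 1].

Lemma unitbP (x : Rg) : reflect (exists y, x * y = 1) (unitb x).
Proof. by apply: (iffP existsP) => [[y /eqP]|[y e]]; exists y => //; apply/eqP. Qed.

Lemma unitbM (a b : Rg) : unitb a -> unitb b -> unitb (a * b).
Proof.
move=> /unitbP[u hu] /unitbP[v hv]; apply/unitbP; exists (u * v).
by rewrite mulrACA hu hv mulr1.
Qed.

Lemma unitb_cancel (u x : Rg) : unitb u -> x * u = 0 -> x = 0.
Proof. by move=> /unitbP[v hv] e; rewrite -(mulr1 x) -hv mulrA e mul0r. Qed.

Lemma pidealP (a x : Rg) : reflect (exists y, x = a * y) (x \in pideal a).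
Proof. by apply: (iffP imsetP) => [[y _ ->]|[y ->]]; exists y. Qed.

Lemma pideal_ideal (a : Rg) : is_ideal (pideal a).
Proof.
split.
- by apply/pidealP; exists 0; rewrite mulr0.
- by move=> x y /pidealP[u ->] /pidealP[v ->]; apply/pidealP; exists (u+v); rewrite mulrDr.
- by move=> b x /pidealP[u ->]; apply/pidealP; exists (b*u); rewrite mulrCA.
Qed.

Definition idealb (J : {set Rg}) : bool :=
  [&& 0 \in J, [forall x, forall y, (x \in J) ==> (y \in J) ==> (x + y \in J)] &
      [forall a, forall x, (x \in J) ==> (a * x \in J)]].

Lemma idealP J : reflect (is_ideal J) (idealb J).
Proof.
apply: (iffP and3P) => [[H0 /forallP H1 /forallP H2]|[H0 H1 H2]]; split => //.
- by move=> x y hx hy; have /forallP/(_ y) := H1 x; rewrite hx hy.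
- by move=> a x hx; have /forallP/(_ x) := H2 a; rewrite hx.
- apply/forallP=> x; apply/forallP=> y; apply/implyP=> hx; apply/implyP=> hy; exact: H1.
- apply/forallP=> a; apply/forallP=> x; apply/implyP=> hx; exact: H2.
Qed.

Lemma max_ideal_above (I : {set Rg}) : Defs.proper_ideal I -> exists J, maximal_ideal J /\ I \subset J.
Proof.
move=> [HI H1].
pose P J := [&& idealb J, 1 \notin J & I \subset J].
have PI : P I by rewrite /P H1 subxx !andbT; apply/idealP.
case: (arg_maxnP (fun J : {set Rg} => #|J|) PI) => J; rewrite /P => /and3P[/idealP iJ nJ sIJ] Jmax.
exists J; split => //; split; first by split.
move=> K [iK nK] sJK; apply/eqP; rewrite eq_sym eqEcard sJK /=; apply: Jmax.
by rewrite /P nK (subset_trans sIJ sJK) !andbT; apply/idealP.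
Qed.

Lemma card_fibers (T T' : finType) (f : T -> T') (G : {set T}) k :
  (forall x, x \in G -> #|[set y in G | f y == f x]| = k) -> #|G| = (#|f @: G| * k)%N.
Proof.
move=> H.
rewrite -sum1_card (partition_big_imset f) /= -sum_nat_const.
apply: eq_bigr => j /imsetP[x xG ->]; rewrite -(H x xG) sum1dep_card.
by apply: eq_card => y; rewrite !inE.
Qed.

Lemma even_involution (T : finType) (g : T -> T) :
  involutive g -> (forall x, g x != x) -> ~~ odd #|T|.
Proof.
move=> ig nf.
pose B := [set x | (enum_rank x < enum_rank (g x))%N].
have CB : ~: B = g @: B.
  apply/setP => x; rewrite !inE; apply/idP/imsetP.
  - rewrite -leqNgt => h; exists (g x); last by rewrite ig.
    rewrite inE ig ltn_neqAle h andbT.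
    apply: contra_neq (nf x) => /val_inj e; by rewrite -[g x]enum_rankK e enum_rankK.
  - case=> y; rewrite inE => h ->; by rewrite ig -leqNgt ltnW.
have := cardsC B; rewrite CB card_imset; last exact: inv_inj.
by move=> <-; rewrite addnn odd_double.
Qed.

End Gen.


Section Struct.
Local Open Scope ring_scope.
Variable Rg : finComNzRingType.
Variables (z : Rg) (r : nat).
Hypothesis Hloc : local_ring Rg.
Hypothesis Hz : uniformizer z.
Hypothesis Hr : nil_index z r.

Lemma nonunit_in_M (x : Rg) : ~~ unitb x -> x \in pideal z.
Proof.
move=> xn.
have pI : Defs.proper_ideal (pideal x).
  split; first exact: pideal_ideal.
  apply/negP => /pidealP[y /esym e]; case/negP: xn; apply/unitbP; by exists y.
case: (max_ideal_above pI) => J [mJ sJ].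
case: Hloc => M0 HM.
have -> : pideal z = M0 by apply/HM.
have <- : J = M0 by apply/HM.
by apply: (subsetP sJ); apply/pidealP; exists 1; rewrite mulr1.
Qed.

Lemma one_notin_M : 1 \notin pideal z.
Proof. by case: Hz => -[]. Qed.

Lemma unit_notin_M (x : Rg) : unitb x -> x \notin pideal z.
Proof.
move=> /unitbP[y hy]; apply/negP => /pidealP[w ew].
case/negP: one_notin_M; apply/pidealP; exists (w * y); by rewrite mulrA -ew.
Qed.

Lemma M_add (x y : Rg) : x \in pideal z -> y \in pideal z -> x + y \in pideal z.
Proof. by case: (pideal_ideal z) => _ H _; apply: H. Qed.

Lemma fact_z k (x : Rg) : (exists y, x = z ^+ k * y) \/
   (exists j u, (j < k)%N /\ unitb u /\ x = z ^+ j * u).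
Proof.
elim: k => [|k [[y ->]|[j [u [jk [uu ->]]]]]].
- by left; exists x; rewrite expr0 mul1r.
- case: (boolP (unitb y)) => uy; first by right; exists k, y.
  left; move/nonunit_in_M: uy => /pidealP[w ->]; exists w; by rewrite exprSr mulrA.
- by right; exists j, u; split => //; apply: ltnW.
Qed.

Lemma r_pos : (0 < r)%N. Proof. by case: Hr. Qed.

Lemma zpow_nz k : (k < r)%N -> z ^+ k != 0.
Proof.
case: Hr => r0 [zr zk] kr; case: k kr => [|k] kr.
  by rewrite expr0 oner_neq0.
by apply: zk; rewrite kr.
Qed.

Lemma ann_z i (x : Rg) : (i <= r)%N -> z ^+ i * x = 0 -> x \in pideal (z ^+ (r - i)).
Proof.
move=> ir e; case: (fact_z (r - i) x) => [[y ->]|[j [u [jk [uu ex]]]]].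
  by apply/pidealP; exists y.
exfalso; move: e; rewrite ex mulrA -exprD => /(unitb_cancel uu) e.
have : (i + j < r)%N by lia.
by move/zpow_nz; rewrite e eqxx.
Qed.

Definition nI i := #|pideal (z ^+ i)|.

Lemma nI_step i : (i < r)%N -> nI i = (nI i.+1 * nI r.-1)%N.
Proof.
move=> ir; rewrite /nI (@card_fibers _ _ (fun x => z * x) _ #|pideal (z ^+ r.-1)|).
  congr (_ * _)%N; apply: eq_card => y; apply/imsetP/pidealP.
    by case=> x /pidealP[w ->] ->; exists w; rewrite exprS mulrA.
  by case=> w ->; exists (z ^+ i * w); [apply/pidealP; exists w|rewrite exprS mulrA].
move=> x0 /pidealP[a ->].
rewrite -(card_imset (pideal (z ^+ r.-1)) (addrI (z ^+ i * a))).
apply: eq_card => y; rewrite inE; apply/andP/imsetP.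
  case=> /pidealP[b ->] /eqP e.
  exists (z ^+ i * b - z ^+ i * a); last by rewrite addrC subrK.
  have -> : r.-1 = (r - 1)%N by lia.
  apply: ann_z; first by lia.
  by rewrite expr1 mulrBr e subrr.
case=> w /pidealP[c ->] ->; split.
  apply/pidealP; exists (a + z ^+ (r.-1 - i) * c).
  by rewrite mulrDr mulrA -exprD; congr (_ + _ ^+ _ * _); lia.
rewrite mulrDr !mulrA -!exprS.
have -> : r.-1.+1 = r by lia.
by case: Hr => _ [-> _]; rewrite mul0r addr0.
Qed.

Lemma nI_r : nI r = 1%N.
Proof.
case: Hr => _ [zr _]; rewrite /nI zr -(cards1 (0 : Rg)); apply: eq_card => x.
rewrite inE; apply/pidealP/eqP; first by case=> y ->; rewrite mul0r.
by move=> ->; exists 0; rewrite mul0r.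
Qed.

Lemma nI_0 : nI 0 = #|Rg|.
Proof.
rewrite /nI expr0; apply: eq_card => x; rewrite inE; apply/pidealP.
by exists x; rewrite mul1r.
Qed.

Lemma nI_pow j : (j <= r)%N -> nI (r - j) = (nI r.-1 ^ j)%N.
Proof.
elim: j => [|j IH] jr; first by rewrite subn0 nI_r.
rewrite expnS mulnC -IH; last by lia.
have -> : (r - j = (r - j.+1).+1)%N by lia.
apply: nI_step; lia.
Qed.

Lemma card_R : #|Rg| = (residue_size z ^ r)%N /\ #|pideal z| = (residue_size z ^ (r - 1))%N.
Proof.
have r0 := r_pos.
have h0 := nI_pow (leqnn r); rewrite subnn nI_0 in h0.
have h1 : nI 1 = (nI r.-1 ^ (r - 1))%N by rewrite -nI_pow; [congr nI; lia | lia].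
have qe : residue_size z = nI r.-1.
  rewrite /residue_size h0; rewrite /nI expr1 in h1; rewrite h1.
  have -> : r = (r - 1).+1 by lia.
  rewrite expnS subSS subn0 mulnK // expn_gt0; apply/orP; left.
  rewrite /nI card_gt0; apply/set0Pn; exists 0; apply/pidealP; exists 0; by rewrite mulr0.
by rewrite qe h0; split => //; rewrite -h1 /nI expr1.
Qed.

End Struct.


Section Struct2.
Local Open Scope ring_scope.
Variable Rg : finComNzRingType.
Variables (z : Rg) (r : nat).
Hypothesis Hloc : local_ring Rg.
Hypothesis Hz : uniformizer z.
Hypothesis Hr : nil_index z r.

Lemma two_unit : odd (residue_size z) -> unitb (2%:R : Rg).
Proof.
move=> oq; case: (boolP (unitb (2%:R : Rg))) => // u2; exfalso; move: u2 => /(nonunit_in_M Hloc Hz) /pidealP[w ew].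
pose t := z ^+ (r - 1).
have tt0 : t + t = 0.
  rewrite -mulr2n -mulr_natl ew /t mulrAC -exprS.
  have -> : (r - 1).+1 = r by have := r_pos Hr; lia.
  by case: Hr => _ [-> _]; rewrite mul0r.
have tn0 : t != 0 by apply: (zpow_nz Hr); have := r_pos Hr; lia.
have := @even_involution Rg (fun x => x + t).
case: (card_R Hloc Hz Hr) => -> _; rewrite oddX oq orbT.
have r0 := r_pos Hr; case: r r0 => // r' _ /=.
move=> H; suff : false by []; apply: H.
- by move=> x /=; rewrite -addrA tt0 addr0.
- by move=> x; rewrite -subr_eq0 addrC addKr.
Qed.

Lemma sq_inj (x y : Rg) : odd (residue_size z) -> unitb x -> x ^+ 2 = y ^+ 2 -> y = x \/ y = - x.
Proof.
move=> oq ux e.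
have e0 : (x - y) * (x + y) = 0 by rewrite -subr_sqr e subrr.
case: (boolP (unitb (x - y))) => u1.
  right; move: e0; rewrite mulrC => /(unitb_cancel u1) /eqP.
  by rewrite addrC addr_eq0 => /eqP.
case: (boolP (unitb (x + y))) => u2.
  by left; move: e0 => /(unitb_cancel u2) /subr0_eq.
have := M_add (nonunit_in_M Hloc Hz u1) (nonunit_in_M Hloc Hz u2).
rewrite addrACA addNr addr0 -mulr2n -mulr_natl.
have uu : unitb (2%:R * x) by apply: unitbM => //; exact: two_unit.
by move: (unit_notin_M Hz uu) => /negP.
Qed.

End Struct2.


Section Incid.
Local Open Scope ring_scope.
Variable Rg : finComNzRingType.
Variable M : {set Rg}.
Hypothesis HM : forall x : Rg, ~~ unitb x -> x \in M.
Variable P : {set Rg * Rg}.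

Definition on (p l : Rg * Rg) : bool := p.2 == l.1 * p.1 + l.2.
Definition fl (l : Rg * Rg) : nat := (\sum_(p in P) on p l)%N.

Lemma lines_through (p : Rg * Rg) : (\sum_(l : Rg * Rg) on p l)%N = #|Rg|.
Proof.
rewrite -big_mkcondr /= sum1dep_card.
rewrite -cardsT -(card_imset [set: Rg] (f := fun s => (s, p.2 - s * p.1))); last first.
  by move=> s t [].
apply: eq_card => l; rewrite !inE; apply/idP/imsetP.
  move=> /eqP e; exists l.1 => //; rewrite e addrC addKr; by case: l e.
by case=> s _ ->; rewrite /on /= addrC subrK.
Qed.

Lemma sum_fl : (\sum_l fl l = #|Rg| * #|P|)%N.
Proof.
rewrite /fl exchange_big /= mulnC -sum_nat_const.
by apply: eq_bigr => p _; apply: lines_through.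
Qed.

Definition cpp (p p' : Rg * Rg) : nat := (\sum_l (on p l && on p' l))%N.

Lemma sum_fl2 : (\sum_l fl l ^ 2 = \sum_(p in P) \sum_(p' in P) cpp p p')%N.
Proof.
rewrite /fl /cpp.
have -> : (\sum_l (\sum_(p in P) on p l) ^ 2 =
    \sum_l \sum_(p in P) \sum_(p' in P) (on p l && on p' l))%N.
  apply: eq_bigr => l _; rewrite expnS expn1 big_distrl /=.
  apply: eq_bigr => p _; rewrite big_distrr /=; apply: eq_bigr => p' _.
  by case: (on p l); case: (on p' l).
rewrite exchange_big /=; apply: eq_bigr => p _.
by rewrite exchange_big.
Qed.

Lemma cpp_unit (p p' : Rg * Rg) : unitb (p'.1 - p.1) -> (cpp p p' <= 1)%N.
Proof.
move=> /unitbP[v hv].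
rewrite /cpp -big_mkcondr /= sum1dep_card; apply/card_le1_eqP => l1 l2.
rewrite !inE /on => /andP[/eqP e1 /eqP e1'] /andP[/eqP e2 /eqP e2'].
have s1 : l1.1 = (p'.2 - p.2) * v.
  rewrite e1 e1'; have -> : l1.1 * p'.1 + l1.2 - (l1.1 * p.1 + l1.2) = l1.1 * (p'.1 - p.1) by ring.
  by rewrite -mulrA hv mulr1.
have s2 : l2.1 = (p'.2 - p.2) * v.
  rewrite e2 e2'; have -> : l2.1 * p'.1 + l2.2 - (l2.1 * p.1 + l2.2) = l2.1 * (p'.1 - p.1) by ring.
  by rewrite -mulrA hv mulr1.
have t1 : l1.2 = p.2 - l1.1 * p.1 by rewrite e1 addrC addKr.
have t2 : l2.2 = p.2 - l2.1 * p.1 by rewrite e2 addrC addKr.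
by case: l1 l2 s1 s2 t1 t2 {e1 e1' e2 e2'} => a b [c d] /= -> -> -> ->.
Qed.

Lemma cpp_sum_bound (p : Rg * Rg) :
  (\sum_(p' in P) cpp p p' <= #|P| + #|Rg| * #|M|)%N.
Proof.
rewrite (bigID (fun p' : Rg * Rg => unitb (p'.1 - p.1))) /=.
apply: leq_add.
  apply: (@leq_trans (\sum_(p' in P | unitb (p'.1 - p.1)%R) 1)%N).
    by apply: leq_sum => p' /andP[_ u]; apply: cpp_unit.
  rewrite sum1dep_card; apply: subset_leq_card; apply/subsetP => x.
  by rewrite inE => /andP[].
rewrite /cpp exchange_big /=.
apply: (@leq_trans (\sum_l (on p l) * #|M|)%N).
  apply: leq_sum => l _.
  case: (boolP (on p l)) => /= hpl; last first.
    by rewrite big1 // => p' _; rewrite andFb.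
  rewrite mul1n.
  apply: (@leq_trans #|[set p' in P | ~~ unitb (p'.1 - p.1)%R & on p' l]|).
    rewrite -sum1dep_card big_mkcond [X in (_ <= X)%N]big_mkcond /=; apply: leq_sum => i _.
    by case: (i \in P); case: (unitb _); case: (on i l).
  rewrite -(card_imset M (addrI p.1)).
  rewrite -(card_in_imset (f := fun p' : Rg * Rg => p'.1)); last first.
    move=> [x1 y1] [x2 y2]; rewrite !inE /on /= => /and3P[_ _ /eqP ->] /and3P[_ _ /eqP ->].
    by move=> ->.
  apply: subset_leq_card; apply/subsetP => x /imsetP[p' + ->].
  rewrite inE => /and3P[_ hu _]; apply/imsetP; exists (p'.1 - p.1).
    exact: HM.
  by rewrite addrC subrK.
by rewrite -big_distrl /= lines_through.
Qed.

Lemma sum_fl2_bound : (\sum_l fl l ^ 2 <= #|P| * #|P| + #|P| * (#|Rg| * #|M|))%N.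
Proof.
rewrite sum_fl2 -mulnDr -sum_nat_const; apply: leq_sum => p _; exact: cpp_sum_bound.
Qed.

End Incid.


Section CS.
Local Open Scope ring_scope.
Variable R : realDomainType.

Lemma cauchy_schwarz (I : finType) (A : {pred I}) (g : I -> R) :
  (\sum_(i in A) g i) ^+ 2 <= #|A|%:R * \sum_(i in A) g i ^+ 2.
Proof.
set k : R := #|A|%:R; set G := \sum_(i in A) g i; set S := \sum_(i in A) g i ^+ 2.
have H : 0 <= \sum_(i in A) (k * g i - G) ^+ 2 by apply: sumr_ge0 => i _; exact: sqr_ge0.
have E : \sum_(i in A) (k * g i - G) ^+ 2 = k * (k * S - G ^+ 2).
  rewrite (eq_bigr (fun i => k ^+ 2 * g i ^+ 2 - (2%:R * k * G) * g i + G ^+ 2)); last first.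
    by move=> i _; ring.
  rewrite !big_split /= sumrN sumr_const -!mulr_sumr -/S -/G -/k.
  rewrite -mulr_natr -/k; ring.
rewrite E in H.
have k0 : 0 <= k by rewrite ler0n.
case: (ltrP 0 k) => kp.
  by rewrite -subr_ge0; rewrite pmulr_rge0 in H.
have k00 : k = 0 by apply/eqP; rewrite eq_le kp k0.
have : #|A| = 0%N by apply/eqP; rewrite -(eqr_nat R) -/k k00.
move=> /eqP; rewrite -/(pred0b A) => /pred0P A0.
by rewrite /G big_pred0 // expr0n /= mulr_ge0 // sumr_ge0 // => i _; exact: sqr_ge0.
Qed.

End CS.

Section Inc2.
Local Open Scope ring_scope.
Variable Rg : finComNzRingType.
Variable M : {set Rg}.
Hypothesis HM : forall x : Rg, ~~ unitb x -> x \in M.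
Variable P : {set Rg * Rg}.
Variable L : {set Rg * Rg}.

Lemma incidence (a : nat) :
  (#|L| * a <= \sum_(l in L) fl P l)%N ->
  (a * #|Rg| <= 2 * #|P|)%N \/ (a ^ 2 * #|L| <= 4 * (#|Rg| * #|M| * #|P|))%N.
Proof.
move=> HI; case: (leqP (a * #|Rg|) (2 * #|P|)) => h; [by left | right].
set N := #|Rg| in h *; set Pi := #|P| in h *; set m := #|M|; set Lc := #|L| in HI *.
set I := (\sum_(l in L) fl P l)%N in HI.
have F1 := sum_fl P. have F2 := sum_fl2_bound HM P.
rewrite -/N -/Pi in F1; rewrite -/N -/Pi -/m in F2.
have F3 : #|{: Rg * Rg}| = (N * N)%N by rewrite card_prod.
pose g (l : Rg * Rg) : int := (N * fl P l)%:R - Pi%:R.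
have Eall : \sum_l g l ^+ 2 = (N * N)%:R * ((\sum_l fl P l ^ 2)%N%:R - (Pi * Pi)%:R) :> int.
  rewrite (eq_bigr (fun l => (N * N)%:R * (fl P l ^ 2)%N%:R - (2 * N * Pi)%:R * (fl P l)%:R + (Pi * Pi)%:R)); last first.
    by move=> l _; rewrite /g; ring.
  rewrite !big_split /= sumrN sumr_const -!mulr_sumr -!natr_sum F1 F3.
  rewrite -mulr_natr !natrM; ring.
have Ball : \sum_l g l ^+ 2 <= (N * N)%:R * (Pi * (N * m))%:R :> int.
  rewrite Eall; apply: ler_wpM2l; first exact: ler0n.
  by rewrite lerBlDr -natrD ler_nat addnC.
have BL : \sum_(l in L) g l ^+ 2 <= \sum_l g l ^+ 2.
  rewrite [X in _ <= X](bigID (fun l => l \in L)) /= lerDl.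
  by apply: sumr_ge0 => l _; exact: sqr_ge0.
have CS := cauchy_schwarz (mem L) g.
have EG : \sum_(l in L) g l = (N * I)%:R - (Lc * Pi)%:R :> int.
  rewrite /g big_split /= sumrN sumr_const /I natrM natr_sum mulr_sumr.
  rewrite -mulr_natr natrM /Lc; congr (_ - _); last by ring.
  by apply: eq_bigr => l _; rewrite natrM.
have G2 : (Lc * N * a)%:R <= 2%:R * \sum_(l in L) g l :> int.
  have HI' : (Lc * a)%:R <= I%:R :> int by rewrite ler_nat.
  have h' : (2 * Pi)%:R < (a * N)%:R :> int by rewrite ltr_nat.
  rewrite EG; move: HI' h'; rewrite !natrM => HI' h'.
  have : (Lc%:R * a%:R) * N%:R <= I%:R * N%:R :> int by apply: ler_wpM2r.
  have : Lc%:R * (2%:R * Pi%:R) <= Lc%:R * (a%:R * N%:R) :> int by apply: ler_wpM2l => //; exact: ltW.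
  nra.
have Gpos : 0 <= (Lc * N * a)%:R :> int by exact: ler0n.
have S1 : ((Lc * N * a) ^ 2)%:R <= 4%:R * (Lc%:R * ((N * N)%:R * (Pi * (N * m))%:R)) :> int.
  have e4 : 4%:R * (\sum_(l in L) g l) ^+ 2 = (2%:R * \sum_(l in L) g l) ^+ 2 :> int by ring.
  apply: (@le_trans _ _ (4%:R * (\sum_(l in L) g l) ^+ 2)).
    rewrite e4 natrX; move: G2 Gpos; set X := \sum_(l in L) g l; set Y := (Lc * N * a)%:R; nra.
  apply: ler_wpM2l => //; apply: (le_trans CS); apply: ler_wpM2l => //.
  exact: le_trans BL Ball.
move: S1; rewrite -!natrM ler_nat => S1.
have N0 : (0 < N)%N by rewrite /N; apply/card_gt0P; exists 0.
case: (posnP Lc) => L0; first by rewrite L0 muln0.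
rewrite -(@leq_pmul2l (Lc * N * N)%N); last by rewrite !muln_gt0 L0 N0.
apply: (leq_trans _ (leq_trans S1 _)); apply: eq_leq; rewrite /Lc; ring.
Qed.

End Inc2.


Lemma card_fibers_le (T T' : finType) (f : T -> T') (G : {set T}) k :
  (forall x, x \in G -> (#|[set y in G | f y == f x]| <= k)%N) -> (#|G| <= #|f @: G| * k)%N.
Proof.
move=> H.
rewrite -sum1_card (partition_big_imset f) /= -sum_nat_const.
apply: leq_sum => j /imsetP[x xG ->]; rewrite sum1dep_card.
by apply: leq_trans (H x xG); apply: subset_leq_card; apply/subsetP => y; rewrite !inE.
Qed.

Section Comb.
Local Open Scope ring_scope.
Variable Rg : finComNzRingType.
Variables (z : Rg) (r : nat).
Hypothesis Hloc : local_ring Rg.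
Hypothesis Hz : uniformizer z.
Hypothesis Hr : nil_index z r.
Hypothesis oq : odd (residue_size z).
Variable A : {set Rg}.
Hypothesis HA : (2 * #|pideal z| <= #|A|)%N.

Lemma sq_big : (#|A| <= 4 * #|sqset A|)%N.
Proof.
pose Au := [set x in A | unitb x].
have h1 : (#|A| <= #|Au| + #|pideal z|)%N.
  rewrite -(cardsID (pideal z) A) addnC leq_add //.
    apply: subset_leq_card; apply/subsetP => x; rewrite !inE => /andP[xn xA].
    by rewrite xA /=; apply: contraR xn => /(nonunit_in_M Hloc Hz).
  by apply: subset_leq_card; apply/subsetP => x; rewrite inE => /andP[].
have h2 : (#|Au| <= #|[set x ^+ 2 | x in Au]| * 2)%N.
  apply: card_fibers_le => x; rewrite inE => /andP[xA ux].
  apply: (@leq_trans #|[set x; - x]|); last by rewrite cards2; case: (_ != _).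
  apply: subset_leq_card; apply/subsetP => y; rewrite !inE => /andP[_ /eqP e].
  by case: (sq_inj Hloc Hz Hr oq ux (esym e)) => ->; rewrite eqxx ?orbT.
have h3 : (#|[set x ^+ 2 | x in Au]| <= #|sqset A|)%N.
  apply: subset_leq_card; apply/subsetP => y /imsetP[x]; rewrite inE => /andP[xA _] ->.
  by apply/imsetP; exists x.
lia.
Qed.

Definition PP := [set (p.1, p.2 - p.1 ^+ 2) | p in setX (sumset A) (sumset (sqset A))].
Definition LL := [set (- (2%:R * p.1), p.2 + p.1 ^+ 2) | p in setX A (sqset A)].

Lemma card_PP : #|PP| = (#|sumset A| * #|sumset (sqset A)|)%N.
Proof.
rewrite /PP card_imset ?cardsX // => -[x1 y1] [x2 y2] /= [e1 e2].
by rewrite e1 in e2 *; move/addIr: e2 => ->.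
Qed.

Lemma card_LL : #|LL| = (#|A| * #|sqset A|)%N.
Proof.
rewrite /LL card_imset ?cardsX // => -[c1 e1] [c2 e2] /= [h1 h2].
have /unitbP[v hv] := two_unit Hloc Hz Hr oq.
have ec : c1 = c2.
  move/oppr_inj: h1 => h1.
  have : v * (2%:R * c1) = v * (2%:R * c2) by rewrite h1.
  by rewrite !mulrA (mulrC v) hv !mul1r.
by rewrite ec in h2 *; move/addIr: h2 => ->.
Qed.

Lemma fl_LL l : l \in LL -> (#|A| <= fl PP l)%N.
Proof.
case/imsetP => -[c e]; rewrite inE => /andP[/= cA eS] ->.
rewrite /fl -big_mkcondr /= sum1dep_card.
rewrite -(card_imset A (f := fun x => (x + c, x ^+ 2 + e - (x + c) ^+ 2))); last first.
  by move=> x y [] /addIr.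
apply: subset_leq_card; apply/subsetP => X /imsetP[x xA ->]; rewrite inE; apply/andP; split.
  apply/imsetP; exists (x + c, x ^+ 2 + e); last by [].
  rewrite inE /=; apply/andP; split.
    by apply: (imset2_f (fun a b => a + b)) xA cA.
  by apply: (imset2_f (fun a b => a + b)) => //; apply/imsetP; exists x.

by rewrite /on /=; apply/eqP; ring.
Qed.

Lemma comb_main :
  (#|A| * #|Rg| <= 2 * (#|sumset A| * #|sumset (sqset A)|))%N \/
  (#|A| ^ 4 <= 16 * (#|Rg| * #|pideal z| * (#|sumset A| * #|sumset (sqset A)|)))%N.
Proof.
have HI : (#|LL| * #|A| <= \sum_(l in LL) fl PP l)%N.
  rewrite -sum_nat_const; apply: leq_sum => l; exact: fl_LL.
case: (incidence (nonunit_in_M Hloc Hz) HI) => hb0; first by left; rewrite -card_PP.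
right; move: hb0; rewrite card_PP card_LL.
have := sq_big; set a := #|A|; set s := #|sqset A|; set W := (_ * _ * _)%N.
move=> hs hb.
have e1 : (a ^ 4 = a ^ 3 * a)%N by rewrite -expnSr.
have e2 : (a ^ 3 * a <= a ^ 3 * (4 * s))%N by rewrite leq_mul2l hs orbT.
have e3 : (a ^ 3 * (4 * s) = 4 * (a ^ 2 * (a * s)))%N by rewrite !expnS expn0; ring.
rewrite e1; apply: (leq_trans e2); rewrite e3.
have -> : (16 = 4 * 4)%N by [].
by rewrite -mulnA leq_mul2l /=.
Qed.

End Comb.

From Stdlib Require Import Reals Lra Psatz.

Section RealCore.
Local Open Scope R_scope.

Lemma sq_le (u v : R) : 0 <= v -> u ^ 2 <= v ^ 2 -> u <= v.
Proof. intros hv h. destruct (Rle_dec u 0); [Lra.lra|]. Psatz.nra. Qed.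

Lemma real_core (c q m a S T : R) :
  0 < c -> 0 < q -> 0 < m -> 0 < a -> a <= q * m -> 0 <= S -> 0 <= T ->
  (a * (q * m) <= 2 * (S * T) \/ a ^ 4 <= 16 * ((q * m) * m * (S * T))) ->
  c * (q * m) ^ 3 <= q * (S * a ^ 2) ->
  Rmin (1/4) (c/16) * (q * m) * a ^ 2 <= (Rmax S T) ^ 3.
Proof.
intros c0 q0 m0 a0 aQ S0 T0 Hc Hs.
set (Q := q * m) in *. set (K := Rmin (1/4) (c/16)). set (X := Rmax S T).
assert (Q0 : 0 < Q) by (unfold Q; Psatz.nra).
assert (K0 : 0 < K) by (unfold K; apply Rmin_glb_lt; Lra.lra).
assert (K1 : K <= 1/4) by (unfold K; apply Rmin_l).
assert (K2 : K <= c/16) by (unfold K; apply Rmin_r).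
assert (SX : S <= X) by (unfold X; apply Rmax_l).
assert (TX : T <= X) by (unfold X; apply Rmax_r).
assert (X0 : 0 <= X) by Lra.lra.
assert (STX : S * T <= X ^ 2) by Psatz.nra.
assert (X3 : 0 <= X ^ 3) by (apply pow_le; Lra.lra).
apply sq_le; [exact X3|].
assert (E6 : (X ^ 3) ^ 2 = (X ^ 2) ^ 3) by ring.
rewrite E6.
set (Y := X ^ 2) in *.
assert (Y0 : 0 <= Y) by (unfold Y; Psatz.nra).
destruct Hc as [H1 | H2].
-
  assert (hY : a * Q / 2 <= Y) by Lra.lra.
  assert (hY3 : (a * Q / 2) ^ 3 <= Y ^ 3).
  { apply pow_incr. split; [|exact hY]. apply Rmult_le_pos; [Psatz.nra|Lra.lra]. }
  assert (h2 : (K * Q * a ^ 2) ^ 2 <= (a * Q / 2) ^ 3).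
  { assert (KK : K ^ 2 <= 1/16) by Psatz.nra.
    assert (e1 : (K * Q * a ^ 2) ^ 2 = K ^ 2 * (Q ^ 2 * a ^ 4)) by ring.
    assert (e2 : (a * Q / 2) ^ 3 = (1/8) * (a ^ 3 * Q ^ 3)) by field.
    rewrite e1 e2.
    assert (p1 : 0 <= Q ^ 2 * a ^ 4) by (apply Rmult_le_pos; apply pow_le; Lra.lra).
    assert (p2 : Q ^ 2 * a ^ 4 <= a ^ 3 * Q ^ 3).
    { assert (e3 : Q ^ 2 * a ^ 4 = (Q ^ 2 * a ^ 3) * a) by ring.
      assert (e4 : a ^ 3 * Q ^ 3 = (Q ^ 2 * a ^ 3) * Q) by ring.
      rewrite e3 e4. apply Rmult_le_compat_l; [|exact aQ].
      apply Rmult_le_pos; apply pow_le; Lra.lra. }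
    Psatz.nra. }
  Lra.lra.
-
  assert (H2' : q * a ^ 4 <= 16 * Q ^ 2 * Y).
  { assert (e : q * (16 * (Q * m * (S * T))) = 16 * Q ^ 2 * (S * T)) by (unfold Q; ring).
    assert (h : q * a ^ 4 <= q * (16 * (Q * m * (S * T)))) by (apply Rmult_le_compat_l; Lra.lra).
    rewrite e in h. assert (0 <= 16 * Q ^ 2) by Psatz.nra. Psatz.nra. }
  destruct (Rle_dec (K * Q * a ^ 2) (S ^ 3)) as [hS | hS].
  + assert (S3 : S ^ 3 <= X ^ 3) by (apply pow_incr; Lra.lra).
    assert (E : (X ^ 3) ^ 2 = Y ^ 3) by (unfold Y; ring).
    rewrite -E. apply pow_incr. split; [|Lra.lra]. apply Rmult_le_pos; [Psatz.nra|]. apply pow_le; Lra.lra.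
  + apply Rnot_le_lt in hS.
    assert (A1 : (c * Q ^ 3) ^ 3 <= (q * (S * a ^ 2)) ^ 3).
    { apply pow_incr. split; [|exact Hs]. apply Rmult_le_pos; [Lra.lra|]. apply pow_le; Lra.lra. }
    assert (A2 : (q * (S * a ^ 2)) ^ 3 <= q ^ 3 * (K * Q * a ^ 2) * a ^ 6).
    { assert (e : (q * (S * a ^ 2)) ^ 3 = q ^ 3 * S ^ 3 * a ^ 6) by ring. rewrite e.
      apply Rmult_le_compat_r; [apply pow_le; Lra.lra|].
      apply Rmult_le_compat_l; [apply pow_le; Lra.lra|Lra.lra]. }
    assert (A3 : c ^ 3 * Q ^ 8 <= K * (q ^ 3 * a ^ 8)).
    { assert (e1 : (c * Q ^ 3) ^ 3 = Q * (c ^ 3 * Q ^ 8)) by ring.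
      assert (e2 : q ^ 3 * (K * Q * a ^ 2) * a ^ 6 = Q * (K * (q ^ 3 * a ^ 8))) by ring.
      assert (h : Q * (c ^ 3 * Q ^ 8) <= Q * (K * (q ^ 3 * a ^ 8))) by Lra.lra.
      apply Rmult_le_reg_l with Q; Lra.lra. }
    assert (A4 : 4096 * K ^ 3 <= c ^ 3).
    { assert (h : 16 * K <= c) by Lra.lra.
      assert (h3 : (16 * K) ^ 3 <= c ^ 3) by (apply pow_incr; Lra.lra).
      assert (e : (16 * K) ^ 3 = 4096 * K ^ 3) by ring. Lra.lra. }
    assert (A5 : 4096 * K ^ 2 * Q ^ 8 <= q ^ 3 * a ^ 8).
    { assert (p8 : 0 <= Q ^ 8) by (apply pow_le; Lra.lra).
      assert (h : K * (4096 * K ^ 2 * Q ^ 8) <= K * (q ^ 3 * a ^ 8)).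
      { assert (e : K * (4096 * K ^ 2 * Q ^ 8) = (4096 * K ^ 3) * Q ^ 8) by ring.
        rewrite e. apply Rle_trans with (c ^ 3 * Q ^ 8); [|exact A3].
        apply Rmult_le_compat_r; assumption. }
      apply Rmult_le_reg_l with K; Lra.lra. }
    assert (A6 : (q * a ^ 4) ^ 3 <= (16 * Q ^ 2 * Y) ^ 3).
    { apply pow_incr. split; [|exact H2']. apply Rmult_le_pos; [Lra.lra|]. apply pow_le; Lra.lra. }
    assert (A7 : 4096 * Q ^ 6 * ((K * Q * a ^ 2) ^ 2) <= 4096 * Q ^ 6 * Y ^ 3).
    { assert (e1 : 4096 * Q ^ 6 * ((K * Q * a ^ 2) ^ 2) = (4096 * K ^ 2 * Q ^ 8) * a ^ 4) by ring.
      assert (e2 : 4096 * Q ^ 6 * Y ^ 3 = (16 * Q ^ 2 * Y) ^ 3) by ring.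
      assert (e3 : (q * a ^ 4) ^ 3 = (q ^ 3 * a ^ 8) * a ^ 4) by ring.
      rewrite e1 e2. apply Rle_trans with ((q ^ 3 * a ^ 8) * a ^ 4); [|Lra.lra].
      apply Rmult_le_compat_r; [apply pow_le; Lra.lra|exact A5]. }
    assert (p6 : 0 < 4096 * Q ^ 6) by (apply Rmult_lt_0_compat; [Lra.lra|apply pow_lt; Lra.lra]).
    apply Rmult_le_reg_l with (4096 * Q ^ 6); Lra.lra.
Qed.

End RealCore.

Section RealFinal.
Local Open Scope R_scope.

Lemma INR_muln (a b : nat) : INR (muln a b) = INR a * INR b.
Proof. exact: mult_INR. Qed.

Lemma INR_expn (a b : nat) : INR (expn a b) = INR a ^ b.
Proof. by elim: b => [|b IH]; [rewrite expn0 | rewrite expnS INR_muln IH]. Qed.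

Lemma leq_INR (a b : nat) : leq a b -> INR a <= INR b.
Proof. by move=> h; apply: le_INR; apply/ssrnat.leP. Qed.

Lemma INR_leq (a b : nat) : INR a <= INR b -> leq a b.
Proof. by move=> h; apply/ssrnat.leP; apply: INR_le. Qed.

Lemma Rpower_pos' (x y : R) : 0 < Rpower x y.
Proof. rewrite /Rpower; exact: exp_pos. Qed.

Lemma final_rpower (K Q a X : R) : 0 < K -> 0 < Q -> 0 < a -> K * Q * a ^ 2 <= X ^ 3 ->
  Rpower K (1/3) * Rpower Q (1/3) * Rpower a (2/3) <= X.
Proof.
move=> K0 Q0 a0 h.
have a2 : 0 < a ^ 2 by apply: pow_lt.
have P0 : 0 < K * Q * a ^ 2 by apply: Rmult_lt_0_compat => //; apply: Rmult_lt_0_compat.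
have X0 : 0 < X.
  case: (Rlt_le_dec 0 X) => // hX.
  have : X ^ 3 <= 0.
    case: (Rle_lt_or_eq_dec _ _ hX) => [hl|->]; last by rewrite /= Rmult_0_l; apply: Rle_refl.
    have : 0 < (- X) ^ 3 by apply: pow_lt; Lra.lra.
    have -> : (- X) ^ 3 = - (X ^ 3) by ring.
    Lra.lra.
  Lra.lra.
have ea : Rpower a (2/3) = Rpower (a ^ 2) (1/3).
  by rewrite -(@Rpower_pow 2%nat a a0) Rpower_mult /=; congr Rpower; Lra.lra.
rewrite ea !Rpower_mult_distr //; last by apply: Rmult_lt_0_compat.
have eX : X = Rpower (X ^ 3) (1/3).
  by rewrite -(@Rpower_pow 3%nat X X0) Rpower_mult /= (_ : (1 + 1 + 1) * (1/3) = 1) ?Rpower_1 //; Lra.lra.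
rewrite [X in _ <= X]eX; apply: Rle_Rpower_l; Lra.lra.
Qed.
End RealFinal.


Theorem theorem1p5 :
  forall c : R, (0 < c)%R ->
  exists C : R, (0 < C)%R /\
  forall (Rg : finComNzRingType) (z : Rg) (q r : nat),
    finite_valuation_ring Rg ->
    uniformizer z -> nil_index z r -> q = residue_size z ->
    (exists p k : nat, prime p /\ odd p /\ (0 < k)%N /\ q = (p ^ k)%N) ->
    forall A : {set Rg},
      (INR #|A| >= 2 * INR q ^ (r - 1))%R ->
      (INR #|sumset A| * INR #|A| ^ 2 >= c * INR q ^ (3 * r - 1))%R ->
      (Rmax (INR #|sumset A|) (INR #|sumset (sqset A)|)
         >= C * Rpower (INR q) (INR r / 3) * Rpower (INR #|A|) (2 / 3))%R.
Proof.
move=> c c0.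
pose K := Rmin (1/4) (c/16).
have K0 : (0 < K)%R by rewrite /K; apply: Rmin_glb_lt; Lra.lra.
exists (Rpower K (1/3)); split; first exact: Rpower_pos'.
move=> Rg z q r [Hloc _] Hz Hr Hq [p [k [pp [po [k0 qe]]]]] A HA HS.
have r0 := r_pos Hr.
have qe' : q = expn p k by rewrite qe; elim: (k) => // j IH; rewrite expnS -IH.
have oq : odd (residue_size z) by rewrite -Hq qe' oddX po orbT.
have [cN cM] := card_R Hloc Hz Hr; rewrite -Hq in cN cM.
have q0 : leq 1 q by rewrite qe' expn_gt0 prime_gt0.
have qR : (0 < INR q)%R.
  have := leq_INR q0; rewrite /= => h; Lra.lra.
have e2 : INR 2 = 2%R by rewrite /=; Lra.lra.
have HAn : leq (muln 2 #|pideal z|) #|A|.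
  by apply: INR_leq; rewrite INR_muln cM INR_expn e2; apply: Rge_le.
have Hc := comb_main Hloc Hz Hr oq HAn.
set qq := INR q. set m := (qq ^ (r - 1))%R. set a := INR #|A|.
set S := INR #|sumset A|. set T := INR #|sumset (sqset A)|.
have eQ : (qq * m = qq ^ r)%R.
  rewrite /m tech_pow_Rmult; congr pow; lia.
have m0 : (0 < m)%R by apply: pow_lt.
have a0 : (0 < a)%R by rewrite /a; have := Rge_le _ _ HA; rewrite -/qq -/m; Lra.lra.
have aQ : (a <= qq * m)%R.
  rewrite eQ /a /qq -INR_expn -cN; apply: leq_INR; exact: max_card.
have S0 : (0 <= S)%R by apply: pos_INR.
have T0 : (0 <= T)%R by apply: pos_INR.
have HD : (a * (qq * m) <= 2 * (S * T) \/ a ^ 4 <= 16 * ((qq * m) * m * (S * T)))%R.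
  case: Hc => h; [left|right]; move/leq_INR: h; rewrite !INR_muln ?INR_expn cN ?cM !INR_expn -/a -/S -/T -/qq.
    by rewrite eQ e2.
  have e16 : INR 16 = 16%R by rewrite /=; Lra.lra.
  rewrite e16 eQ -/m => h.
  by have -> : (a ^ 4 = a * (a * (a * a)))%R by ring.
have HC : (c * (qq * m) ^ 3 <= qq * (S * a ^ 2))%R.
  have e : (c * (qq * m) ^ 3 = qq * (c * qq ^ (3 * r - 1)))%R.
    rewrite eQ -pow_mult.
    have -> : Nat.mul r 3 = Datatypes.S (Nat.sub (Nat.mul 3 r) 1) by lia.
    rewrite -tech_pow_Rmult; rewrite (_ : Nat.sub (Nat.mul 3 r) 1 = subn (muln 3 r) 1) //; ring.
  rewrite e; apply: Rmult_le_compat_l; [exact: Rlt_le qR | exact: Rge_le].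
have core := real_core c0 qR m0 a0 aQ S0 T0 HD HC.
have fin := final_rpower K0 (Rmult_lt_0_compat _ _ qR m0) a0 core.
apply: Rle_ge; apply: Rle_trans fin; apply: Req_le.
congr (_ * _ * _)%R.
rewrite eQ -(@Rpower_pow r qq qR) Rpower_mult; congr Rpower; Lra.lra.
Qed.
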